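(* Let $\sigma$ be a permutation of length $m$ with exactly one descent and exactly $i$ adjacency pairs. Then the letter $m$ lies on the same side of the descent as the letter $1$ in $\sigma$ if and only if $m-i$ is odd.
   Context: A permutation of length $m$ is an arrangement $\sigma_1\cdots\sigma_m$ of $1,\dots,m$. A descent is an index $d$ with $\sigma_d>\sigma_{d+1}$; if $\sigma$ has exactly one descent at $d$, the positions $1,\dots,d$ are before the descent and $d+1,\dots,m$ after it, and two letters are on the same side of the descent if their positions are both $\le d$ or both $>d$. An adjacency pair is an index $j$ with $\sigma_{j+1}=\sigma_j+1$; the number of adjacency pairs is the number of such indices (so a run of $k$ consecutive increasing values in consecutive positions contributes $k-1$). *)

(* Defs.v *)
From mathcomp Require Import all_boot.
Set Implicit Arguments. Unset Strict Implicit. Unset Printing Implicit Defensive.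

Definition is_perm (m : nat) (s : seq nat) : bool := perm_eq s (iota 1 m).

Definition sig (s : seq nat) (k : nat) : nat := nth 0 s k.-1.

Definition descents (s : seq nat) : seq nat :=
  [seq d <- iota 1 (size s).-1 | sig s d > sig s d.+1].

Definition adj_pairs (s : seq nat) : nat :=
  count (fun j => sig s j.+1 == (sig s j).+1) (iota 1 (size s).-1).

Definition pos (s : seq nat) (a : nat) : nat := (index a s).+1.

Definition same_side (s : seq nat) (d a b : nat) : bool :=
  (pos s a <= d) == (pos s b <= d).

(* Main.v *)
Require Import Defs.
From mathcomp Require Import all_boot zify.
Set Implicit Arguments. Unset Strict Implicit.

Lemma sig_pos s v : v \in s -> sig s (pos s v) = v.
Proof. by move=> h; rewrite /sig /pos /= nth_index. Qed.

Lemma pos_sig s j : uniq s -> 0 < j <= size s -> pos s (sig s j) = j.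
Proof. case: j => [|j] u /andP[h1 h2] //; rewrite /sig /pos index_uniq //. Qed.

Lemma pos_bound s v : v \in s -> 0 < pos s v <= size s.
Proof. rewrite /pos -index_mem => h; lia. Qed.

Lemma sig_mem s j : 0 < j <= size s -> sig s j \in s.
Proof. case: j => [|j] /andP[h1 h2] //; exact: mem_nth. Qed.

Lemma parity (b : nat -> bool) k n :
  odd (count (fun v => b v != b v.+1) (iota k n)) = (b k != b (k + n)).
Proof.
elim: n k => [|n IH] k; first by rewrite addn0 eqxx.
rewrite /= oddD IH addSnnS; by case: (b k); case: (b k.+1); case: (b (k + n.+1)).
Qed.

Lemma mono s lo hi :
  (forall j, lo <= j -> j < hi -> sig s j < sig s j.+1) ->
  forall a b, lo <= a -> a < b -> b <= hi -> sig s a < sig s b.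
Proof.
move=> H a b la; elim: b => [//|b IH] ab bh.
rewrite ltnS leq_eqVlt in ab; case/orP: ab => [/eqP ab|ab]. subst a.
  apply: H; lia.
apply: ltn_trans (IH ab _) (H _ _ _); lia.
Qed.

Lemma sig_out s k : size s < k -> sig s k = 0.
Proof. case: k => [//|k] h; rewrite /sig nth_default //. Qed.

Lemma count_last (P : pred nat) m : 0 < m -> ~~ P m ->
  count P (iota 1 m) = count P (iota 1 m.-1).
Proof.
case: m => [//|n] _ h; rewrite -[n.+1]addn1 iotaD count_cat /= add1n (negbTE h) /=.
rewrite addn1 /=; lia.
Qed.

Unset Implicit Arguments. Set Strict Implicit.
Theorem mainTheorem11 (m i d : nat) (s : seq nat) :
  is_perm m s -> descents s = [:: d] -> adj_pairs s = i ->
  same_side s d m 1 = odd (m - i).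
Proof.
move=> Hp Hd Hi.
have Hs : size s = m by rewrite (perm_size Hp) size_iota.
have Hu : uniq s by rewrite (perm_uniq Hp) iota_uniq.
have Hmem : forall x, (x \in s) = (0 < x <= m).
  by move=> x; rewrite (perm_mem Hp) mem_iota; apply/idP/idP => /andP[a b]; apply/andP; lia.
have dD : d \in descents s by rewrite Hd inE.
move: (dD); rewrite /descents mem_filter mem_iota Hs => /andP[Hdd /andP[d1 d2]].
have Hstep : forall j, 0 < j < m -> j != d -> sig s j < sig s j.+1.
  move=> j /andP[j1 j2] jd.
  case: (ltnP (sig s j.+1) (sig s j)) => h.
    have : j \in descents s by rewrite /descents mem_filter h mem_iota Hs; apply/andP; lia.
    by rewrite Hd inE (negbTE jd).
  rewrite leq_eqVlt in h; case/orP: h => [/eqP h|//].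
  have := pos_sig Hu (j := j); have := pos_sig Hu (j := j.+1).
  rewrite h Hs => e1 e2. have := e1 _; have := e2 _. lia.
have blk : forall a b, 0 < a -> b <= m -> a < b -> (a <= d) = (b <= d) -> sig s a < sig s b.
  move=> a b a0 bm ab e.
  case: (leqP b d) => bd.
    apply: (@mono s 1 d) => //; move=> j j1 j2; apply: Hstep; first (apply/andP; lia).
    apply/eqP; lia.
  have ad : d < a by rewrite ltnNge e -ltnNge.
  apply: (@mono s d.+1 m) => //; move=> j j1 j2; apply: Hstep; first (apply/andP; lia).
  apply/eqP; lia.
have posb : forall v, 0 < v <= m -> 0 < pos s v <= m /\ sig s (pos s v) = v.
  move=> v hv; have vs : v \in s by rewrite Hmem.
  split; last exact: sig_pos. by rewrite -Hs; apply: pos_bound.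
have key : forall v, 0 < v < m ->
    (pos s v.+1 == (pos s v).+1) = ((pos s v <= d) == (pos s v.+1 <= d)).
  move=> v /andP[v0 vm].
  have [/andP[p0 pm] sp] := posb v ltac:(apply/andP; lia).
  have [/andP[q0 qm] sq] := posb v.+1 ltac:(apply/andP; lia).
  set p := pos s v in p0 pm sp *; set q := pos s v.+1 in q0 qm sq *.
  apply/eqP/eqP => [e|e].
    case: (eqVneq p d) => pd.
      move: sq; rewrite e pd => sq.
      move: Hdd; rewrite sq -pd sp; lia.
    rewrite e; apply/idP/idP => h; lia.
  case: (ltngtP p q) => pq.
  - case: (eqVneq q p.+1) => // qp.
    have h1 := blk p p.+1 p0 ltac:(lia) ltac:(lia) ltac:(apply/idP/idP => h; move: e; case: (leqP p d); case: (leqP q d); lia).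
    have h2 := blk p.+1 q ltac:(lia) qm ltac:(lia) ltac:(apply/idP/idP => h; move: e; case: (leqP p d); case: (leqP q d); lia).
    rewrite sp in h1; rewrite sq in h2; lia.
  - have := blk q p q0 pm pq (esym e); rewrite sp sq; lia.
  - move: sq; rewrite -pq sp; lia.
have m0 : 0 < m by lia.
set b := fun v => pos s v <= d.
set R := fun v => (v < m) && (pos s v.+1 == (pos s v).+1).
have mapsig : map (sig s) (iota 1 m) = s.
  apply: (@eq_from_nth _ 0); first by rewrite size_map size_iota Hs.
  move=> k; rewrite size_map size_iota => km.
  by rewrite (nth_map 0) ?size_iota // nth_iota.
have E : i = count (fun v => b v == b v.+1) (iota 1 m.-1).
  rewrite -Hi /adj_pairs Hs -count_last //; last first.
    by rewrite sig_out ?Hs.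
  rewrite (@eq_in_count _ _ (R \o sig s)); last first.
    move=> j; rewrite mem_iota => /andP[j1 j2] /=.
    have sj : sig s j \in s by apply: sig_mem; rewrite Hs; apply/andP; lia.
    have pj : pos s (sig s j) = j by apply: pos_sig => //; rewrite Hs; apply/andP; lia.
    rewrite /R pj; move: sj; rewrite Hmem => /andP[v0 vm].
    apply/eqP/andP => [e|[h /eqP e]].
      have jm : j < m.
        rewrite ltnNge; apply/negP => jm; move: e; rewrite sig_out ?Hs //; lia.
      have : sig s j.+1 \in s by apply: sig_mem; rewrite Hs; apply/andP; lia.
      rewrite Hmem e => /andP[_ h]; split; first lia.
      by rewrite -e pos_sig // Hs; lia.
    have : sig s (pos s (sig s j).+1) = (sig s j).+1 by apply: sig_pos; rewrite Hmem; lia.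
    by rewrite e.
  rewrite -count_map mapsig ((permP Hp) R) (@count_last R m) //; last by rewrite /R /= ltnn.
  apply: eq_in_count => v; rewrite mem_iota => /andP[v1 v2].
  rewrite /R /b key; last lia.
  by rewrite (_ : v < m) //; lia.
have C := count_predC (fun v => b v == b v.+1) (iota 1 m.-1).
have P := parity b 1 m.-1.
rewrite size_iota in C.
rewrite /same_side -/(b m) -/(b 1) E.
have -> : m - count (fun v => b v == b v.+1) (iota 1 m.-1) =
   (count (predC (fun v => b v == b v.+1)) (iota 1 m.-1)).+1 by lia.
rewrite /= (_ : count (predC _) _ = count (fun v => b v != b v.+1) (iota 1 m.-1)) //.
rewrite P (_ : 1 + m.-1 = m); last lia.
by rewrite eq_sym; case: (b 1 == b m).
Qed.
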